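(* Let $x\in\{0,1\}^n$ and let $y\in\{0,1\}^n$ have Hamming distance $k$ to $x$, where $1\le k\le cn$. Apply static hypermutation with FCM to $x$. Let $E_y$ be the event that $y$ is evaluated during the hypermutation, and $E_c$ the event that the hypermutation stops earlier (before evaluating the $k$-th string of its sequence) on a constructive mutation. Then $\Pr\{E_y\vee E_c\}\ge \binom{n}{k}^{-1}$. Moreover, if there are no constructive mutations (i.e. no strings that would count as constructive) at Hamming distance smaller than $k$ from $x$, then $\Pr\{E_y\}=\binom{n}{k}^{-1}$.
   Context: Static hypermutation with FCM (stop at first constructive mutation), with constant parameter $0<c\le1$ and mutation potential $M=cn$ (an integer), applied to $x\in\{0,1\}^n$ for a fitness function $f$: distinct bit positions are chosen uniformly at random without replacement and flipped one after another, and after each flip the current string is evaluated; the process stops as soon as the current string is a constructive mutation (a string whose fitness is better than, or in one variant at least as good as, $f(x)$) or after $M$ bits have been flipped. The $i$-th evaluated string thus has Hamming distance $i$ to $x$. *)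

(* Defs.v *)
From mathcomp Require Import all_boot all_order all_algebra all_fingroup.
Set Implicit Arguments. Unset Strict Implicit. Unset Printing Implicit Defensive.
Import Order.TTheory GRing.Theory Num.Theory.

Definition bitstring (n : nat) := {ffun 'I_n -> bool}.

Definition hamming n (x y : bitstring n) : nat := #|[set j | x j != y j]|.

Definition constructive d (T : orderType d) n (f : bitstring n -> T)
  (strict : bool) (x z : bitstring n) : bool :=
  if strict then (f x < f z)%O else (f x <= f z)%O.

(* The random choice of distinct positions without replacement is modelled by a
   uniformly random permutation s of 'I_n : the t-th flipped position is s t. *)
Definition evalstr n (x : bitstring n) (s : {perm 'I_n}) (i : nat) : bitstring n :=
  [ffun j => x j (+) (j \in [set s t | t : 'I_n & (t < i)%N])].

(* E_y : y is evaluated, i.e. y is the i-th evaluated string for some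
   1 <= i <= M and the process did not stop before (no constructive among the
   first i-1 evaluated strings). *)
Definition E_y d (T : orderType d) n (f : bitstring n -> T) (strict : bool)
  (M : nat) (x y : bitstring n) (s : {perm 'I_n}) : bool :=
  [exists i : 'I_n.+1, [&& (1 <= i)%N, (i <= M)%N, evalstr x s i == y &
     [forall j : 'I_n.+1, ((1 <= j)%N && (j < i)%N) ==>
        ~~ constructive f strict x (evalstr x s j)]]].

Definition E_c d (T : orderType d) n (f : bitstring n -> T) (strict : bool)
  (M k : nat) (x : bitstring n) (s : {perm 'I_n}) : bool :=
  [exists i : 'I_n.+1, [&& (1 <= i)%N, (i < k)%N, (i <= M)%N &
     constructive f strict x (evalstr x s i)]].

Definition Pr n (P : pred {perm 'I_n}) : rat :=
  (#|[set s | P s]|%:R / #|{perm 'I_n}|%:R)%R.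

(* Main.v *)
Require Import Defs.
From mathcomp Require Import all_boot all_order all_algebra all_fingroup.
Import Order.TTheory GRing.Theory Num.Theory.

Section Helpers.

Lemma perm_img_mem (T : finType) (p : {perm T}) (A : {set T}) (x : T) :
  (x \in p @: A) = (p^-1 x \in A)%g.
Proof.
by rewrite -{1}(permKV p x) mem_imset //; exact: perm_inj.
Qed.

Lemma exists_perm_map (T : finType) (m : nat) (A B : {set T}) :
  #|A :\: B| <= m -> #|A| = #|B| -> exists p : {perm T}, p @: A = B.
Proof.
elim: m A => [|m IH] A hm hAB.
  exists 1%g; rewrite imset_perm1; apply/eqP; rewrite eqEcard hAB leqnn andbT.
  by rewrite -setD_eq0 -cards_eq0 -leqn0.
have [/eqP hz|] := boolP (#|A :\: B| == 0).
  exists 1%g; rewrite imset_perm1; apply/eqP; rewrite eqEcard hAB leqnn andbT.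
  by rewrite -setD_eq0 -cards_eq0 hz.
rewrite -lt0n => /card_gt0P [a ha].
have hBA : 0 < #|B :\: A|.
  rewrite cardsD -hAB setIC -cardsD; apply/card_gt0P; by exists a.
move: hBA => /card_gt0P [b hb].
move: ha hb; rewrite !inE => /andP [naB aA] /andP [nbA bB].
set A' := tperm a b @: A.
have hA'B : A' :\: B = (A :\: B) :\ a.
  apply/setP => z; rewrite !inE perm_img_mem tpermV.
  case: tpermP => [->|->|/eqP za /eqP zb].
  - by rewrite eqxx (negbTE nbA) andbF.
  - by rewrite bB (negbTE nbA) !andbF.
  - by rewrite za.
have hcard : #|A'| = #|B| by rewrite card_imset //; exact: perm_inj.
have hlt : #|A' :\: B| <= m.
  move: hm; rewrite hA'B (cardsD1 a (A :\: B)) !inE naB aA /=.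
  by rewrite add1n ltnS.
have [q hq] := IH A' hlt hcard.
exists (tperm a b * q)%g.
rewrite -hq /A' -imset_comp; apply: eq_imset => z /=; by rewrite permM.
Qed.

Variable n : nat.

Definition Lset (i : nat) : {set 'I_n} := [set t : 'I_n | t < i].

Lemma card_Lset i : i <= n -> #|Lset i| = i.
Proof.
move=> hi.
have -> : Lset i = [set widen_ord hi t | t : 'I_i].
  apply/setP => t; rewrite inE; apply/idP/imsetP.
  - move=> ht; exists (Ordinal ht) => //; exact: val_inj.
  - by move=> [u _ ->]; rewrite /= ltn_ord.
by rewrite card_imset ?cardT ?size_enum_ord //; by move=> u v /(congr1 val) /= /val_inj.
Qed.

Lemma evalstr_eq (x y : bitstring n) (s : {perm 'I_n}) (i : nat) :
  (evalstr x s i == y) = (s @: Lset i == [set j | x j != y j]).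
Proof.
have hS : [set s t | t : 'I_n & (t < i)] = s @: Lset i.
  by apply/setP => j; apply/imsetP/imsetP => [[t ht ->]|[t ht ->]];
     exists t => //; move: ht; rewrite !inE.
apply/eqP/eqP => [<-|H].
  apply/setP => j; rewrite inE ffunE hS.
  by case: (x j); case: (j \in _).
apply/ffunP => j; rewrite ffunE hS H inE.
by case: (x j); case: (y j).
Qed.

Lemma hamming_evalstr (x : bitstring n) (s : {perm 'I_n}) (i : nat) :
  i <= n -> hamming x (evalstr x s i) = i.
Proof.
move=> hi; rewrite /hamming.
have := evalstr_eq x (evalstr x s i) s i; rewrite eqxx => /esym/eqP <-.
by rewrite card_imset ?card_Lset //; exact: perm_inj.
Qed.

Definition Gset (A : {set 'I_n}) (k : nat) : {set {perm 'I_n}} :=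
  [set s : {perm 'I_n} | s @: Lset k == A].

Lemma Gset_le k (A B : {set 'I_n}) : #|A| = #|B| -> #|Gset A k| <= #|Gset B k|.
Proof.
move=> hAB; have [p hp] := @exists_perm_map _ _ A B (leqnn _) hAB.
rewrite -(card_imset _ (mulIg p)); apply: subset_leq_card.
apply/subsetP => s' /imsetP [s]; rewrite !inE => /eqP hs ->.
rewrite -hp -hs -imset_comp; apply/eqP; apply: eq_imset => z /=.
by rewrite permM.
Qed.

Lemma count_fiber k (D : {set 'I_n}) :
  #|D| = k -> n`! = 'C(n, k) * #|Gset D k|.
Proof.
move=> hD.
have hk : k <= n by rewrite -hD; apply: leq_trans (max_card _) _; rewrite card_ord.
rewrite -card_Sn.
transitivity (\sum_(s : {perm 'I_n}) 1); first by rewrite sum1_card.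
rewrite (partition_big (fun s : {perm 'I_n} => s @: Lset k) (fun A => #|A| == k)).
  rewrite (eq_bigr (fun _ => #|Gset D k|)).
    have h := card_draws 'I_n k; rewrite card_ord in h.
    rewrite sum_nat_const -h; congr (_ * _); apply: eq_card => A; by rewrite inE.
  move=> A /eqP hA; transitivity #|Gset A k|.
    by rewrite -sum1_card; apply: eq_bigl => s; rewrite inE.
  by apply/eqP; rewrite eqn_leq !Gset_le // hA hD.
move=> s _; rewrite card_imset ?card_Lset //; exact: perm_inj.
Qed.

End Helpers.
Arguments Gset {n}.
Arguments Lset {n}.
Arguments evalstr_eq {n}.
Arguments hamming_evalstr {n}.
Arguments card_Lset {n}.
Theorem lemma1 (d : Order.disp_t) (T : orderType d) (n : nat)
  (f : bitstring n -> T) (strict : bool) (c : rat) (M : nat)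
  (hc0 : (0 < c)%R) (hc1 : (c <= 1)%R) (hM : (M%:R = c * n%:R :> rat)%R)
  (x y : bitstring n) (k : nat) (hk1 : (1 <= k)%N) (hkM : (k <= M)%N)
  (hxy : hamming x y = k) :
  ((('C(n, k))%:R)^-1 <=
     Pr (fun s => E_y f strict M x y s || E_c f strict M k x s))%R
  /\
  ((forall z : bitstring n, (1 <= hamming x z)%N -> (hamming x z < k)%N ->
      ~~ constructive f strict x z) ->
   Pr (fun s => E_y f strict M x y s) = (('C(n, k))%:R)^-1)%R.
Proof.
set D := [set j | x j != y j].
have hD : #|D| = k by rewrite -hxy.
have hkn : k <= n by rewrite -hD; apply: leq_trans (max_card _) _; rewrite card_ord.
have hfib := @count_fiber _ _ _ hD.
have hN : (#|Gset D k|%:R != 0 :> rat)%R.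
  rewrite pnatr_eq0 -lt0n; move: (fact_gt0 n); rewrite hfib muln_gt0.
  by case/andP.
have hPr : forall P : pred {perm 'I_n},
    Pr P = (#|[set s | P s]|%:R * (#|Gset D k|%:R)^-1 * ('C(n, k)%:R)^-1)%R.
  move=> P; rewrite /Pr card_Sn hfib natrM invfM mulrA.
  by rewrite -!mulrA [(_^-1 * _)%R]mulrC.
have Ey_intro : forall s, s \in Gset D k ->
    (forall j : 'I_n.+1, 1 <= j -> j < k -> ~~ constructive f strict x (evalstr x s j)) ->
    E_y f strict M x y s.
  move=> s hs Hj; apply/existsP; exists (inord k); rewrite inordK ?ltnS //.
  rewrite hk1 hkM evalstr_eq; rewrite inE in hs; rewrite hs /=.
  by apply/forallP => j; apply/implyP => /andP [h1 h2]; exact: Hj.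
split.
  rewrite hPr.
  have hle : #|Gset D k| <= #|[set s | E_y f strict M x y s || E_c f strict M k x s]|.
    apply: subset_leq_card; apply/subsetP => s hs; rewrite inE.
    case hc: (E_c f strict M k x s); first by rewrite orbT.
    rewrite orbF; apply: Ey_intro => // j h1 h2; apply/negP => hcj.
    move/negbT: hc => /negP; apply; apply/existsP; exists j.
    by rewrite h1 h2 hcj (leq_trans (ltnW h2) hkM).
  have hNp : 0 < #|Gset D k| by rewrite lt0n -(pnatr_eq0 rat).
  rewrite -[X in (X <= _)%R]mul1r ler_pM2r ?invr_gt0 ?ltr0n ?bin_gt0 //.
  by rewrite ler_pdivlMr ?ltr0n // mul1r ler_nat.
move=> H.
rewrite hPr.
have -> : [set s | E_y f strict M x y s] = Gset D k.
  apply/setP => s; rewrite inE; apply/idP/idP.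
  - case/existsP => i /and4P [h1 h2 /eqP he _].
    have hin : i <= n by rewrite -ltnS ltn_ord.
    have := evalstr_eq x y s i; rewrite he eqxx => /esym /eqP hs.
    have hik : (i : nat) = k by rewrite -hD /D -hs card_imset ?card_Lset //; exact: perm_inj.
    by rewrite inE -hik hs.
  - move=> hs; apply: Ey_intro => // j h1 h2; apply: H.
    + by rewrite hamming_evalstr // -ltnS ltn_ord.
    + by rewrite hamming_evalstr // -ltnS ltn_ord.
by rewrite mulfV // mul1r.
Qed.
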